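(* Let $\kappa>0$ and let $Z=(Z_t)_{t\ge0}$ be a $\kappa$-self-similar Markov process with transition function $P$. Let $0<s\le t\le u$, $a,b\in[0,1]$ and let $B$ be a measurable set. Then \[ \int P(0,s,0,\mathrm{d}x)\, P\bigl(at,t,(at/s)^{\kappa}x,B\bigr) = P(0,t,0,B) \] and \[ \int P\bigl(at,t,(at/s)^{\kappa}x,\mathrm{d}y\bigr)\, P\bigl(bu,u,(bu/t)^{\kappa}y,B\bigr) = P\bigl(abu,u,(abu/s)^{\kappa}x,B\bigr) \] (the second identity holding for every $x$).
   Context: A real-valued càdlàg Markov process $Z=(Z_t)_{t\ge0}$ (Markov with respect to its natural filtration) is $\kappa$-self-similar if $(Z_{ct})_{t\ge0}$ and $(c^\kappa Z_t)_{t\ge0}$ have the same finite-dimensional distributions for every $c>0$; in particular $Z_0=0$. Its transition function is $P(s,t,x,\mathrm{d}y)=\mathbb{P}(Z_t\in\mathrm{d}y\mid Z_s=x)$, $s\le t$. Self-similarity gives the scaling property $P(cs,ct,c^\kappa x,c^\kappa\,\mathrm{d}y)=P(s,t,x,\mathrm{d}y)$ for all $c>0$, $s\le t$, $x$, where for a measure $M$ and $c>0$ the measure $M(c\,\mathrm{d}y)$ is defined by $\int g(y)M(c\,\mathrm{d}y)=\int g(y/c)M(\mathrm{d}y)$. *)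

(* Defs.v *)
From HB Require Import structures.
From mathcomp Require Import all_boot all_order all_algebra.
From mathcomp Require Import all_classical all_reals all_analysis.

Set Implicit Arguments.
Unset Strict Implicit.
Unset Printing Implicit Defensive.

Import Order.TTheory GRing.Theory Num.Theory.
Import numFieldNormedType.Exports.

Local Open Scope classical_set_scope.
Local Open Scope ring_scope.

(* Time is indexed by R; only times t >= 0 are ever used. *)

Definition cadlag (R : realType) (T : Type) (Z : R -> T -> R) : Prop :=
  forall (w : T) (t : R), 0 <= t ->
    (Z^~ w @ at_right t --> Z t w) /\ (0 < t -> cvg (Z^~ w @ at_left t)).

Definition natural_filtration (R : realType) (T : Type) (Z : R -> T -> R)
    (s : R) : set (set T) :=
  <<s [set E | exists r (A : set R), [/\ 0 <= r <= s, measurable A &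
                                        E = Z r @^-1` A] ] >>.

Definition transition_function (R : realType) (P : R -> R -> R.-pker R ~> R)
  : Prop :=
  (forall t x (B : set R), 0 <= t -> measurable B -> P t t x B = \d_x B)
  /\ (forall s t u x (B : set R), 0 <= s -> s <= t -> t <= u -> measurable B ->
        (\int[P s t x]_y P t u y B = P s u x B)%E).

(** Z is Markov w.r.t. its natural filtration with transition function P:
    Pr(E /\ Z_t in B) = E[1_E P(s,t,Z_s,B)] for every E in F_s,
    i.e. P(Z_t in B | F_s) = P(s,t,Z_s,B) a.s. *)
Definition markov_with_transition (R : realType) (d : measure_display)
    (T : measurableType d) (Pr : probability T R) (Z : R -> T -> R)
    (P : R -> R -> R.-pker R ~> R) : Prop :=
  forall s t, 0 <= s -> s <= t ->
  forall (E : set T), natural_filtration Z s E ->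
  forall (B : set R), measurable B ->
    Pr (E `&` Z t @^-1` B) = (\int[Pr]_(w in E) P s t (Z s w) B)%E.

(** kappa-self-similarity: (Z_{ct})_t and (c^kappa Z_t)_t have the same
    finite-dimensional distributions, for every c > 0. *)
Definition self_similar (R : realType) (d : measure_display)
    (T : measurableType d) (Pr : probability T R) (Z : R -> T -> R)
    (kappa : R) : Prop :=
  forall c : R, 0 < c ->
  forall (n : nat) (ts : 'I_n -> R) (Bs : 'I_n -> set R),
    (forall i, 0 <= ts i) -> (forall i, measurable (Bs i)) ->
    Pr (\bigcap_(i in [set: 'I_n]) (Z (c * ts i) @^-1` Bs i)) =
    Pr (\bigcap_(i in [set: 'I_n]) ((fun w => c `^ kappa * Z (ts i) w) @^-1` Bs i)).

(** Scaling property of the transition function: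
    P(cs, ct, c^kappa x, c^kappa dy) = P(s, t, x, dy), where
    M(c dy) is the measure B |-> M(c B). *)
Definition scaling_property (R : realType) (P : R -> R -> R.-pker R ~> R)
    (kappa : R) : Prop :=
  forall (c s t x : R) (B : set R), 0 < c -> 0 <= s -> s <= t -> measurable B ->
    P (c * s) (c * t) (c `^ kappa * x) ((fun y => c `^ kappa * y) @` B)
    = P s t x B.

(* Main.v *)
Require Import Defs.
From HB Require Import structures.
From mathcomp Require Import all_boot all_order all_algebra.
From mathcomp Require Import all_classical all_reals all_analysis.
From mathcomp Require Import measurable_realfun.
From mathcomp Require Import ring lra.
Import Order.TTheory GRing.Theory Num.Theory.
Import numFieldNormedType.Exports.
Local Open Scope classical_set_scope.
Local Open Scope ring_scope.

Lemma scale_int (R : realType) (P : R -> R -> R.-pker R ~> R) (kappa : R)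
  (P_scal : scaling_property P kappa) (c s0 t0 x : R) (f : R -> \bar R) :
  0 < c -> 0 <= s0 -> s0 <= t0 -> measurable_fun [set: R] (f : R -> \bar R) -> (forall y, (0 <= f y)%E) ->
  (\int[P s0 t0 x]_y f (c `^ kappa * y)%R =
   \int[P (c * s0)%R (c * t0)%R (c `^ kappa * x)%R]_z f z)%E.
Proof.
move=> c0 s00 st mf f0.
set k := c `^ kappa.
have k0 : 0 < k by exact: powR_gt0.
have mphi : measurable_fun setT (fun y : R => k * y).
  exact: measurable_funM.
rewrite [RHS](eq_measure_integral (pushforward (P s0 t0 x) (fun y : R => k * y))).
  rewrite (ge0_integral_pushforward mphi) //.

move=> A mA _.
transitivity (P s0 t0 x ((fun y : R => (k * y)%R) @^-1` A)); last by [].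
rewrite -(P_scal c s0 t0 x) //; last first.
  by have := mphi measurableT A mA; rewrite setTI.
congr (P _ _ _ _); apply/seteqP; split => [z Az|z [y /= Ay <-]]; last by [].
  by exists (k^-1 * z); rewrite /= ?mulrA ?divff ?mul1r // gt_eqF.
Qed.

Lemma int_cst_pker (R : realType) (Q : R.-pker R ~> R) (x : R) (r : \bar R) :
  (\int[Q x]_y (cst r) y = r)%E.
Proof. by rewrite integral_cst // prob_kernel mule1. Qed.

Theorem lemma2p1 (R : realType) (d : measure_display) (T : measurableType d)
  (Pr : probability T R) (Z : R -> T -> R) (P : R -> R -> R.-pker R ~> R)
  (kappa : R) (kappa_gt0 : 0 < kappa)
  (Z_meas : forall t, measurable_fun setT (Z t))
  (Z_cadlag : cadlag Z)
  (Z_markov : markov_with_transition Pr Z P)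
  (Z_ss : self_similar Pr Z kappa)
  (P_tf : transition_function P)
  (P_scal : scaling_property P kappa) :
  forall (s t u a b : R) (B : set R),
    0 < s -> s <= t -> t <= u -> 0 <= a <= 1 -> 0 <= b <= 1 -> measurable B ->
    (\int[P 0%R s 0%R]_x P (a * t)%R t ((a * t / s) `^ kappa * x)%R B
       = P 0%R t 0%R B)%E
    /\ (forall x : R,
        (\int[P (a * t)%R t ((a * t / s) `^ kappa * x)%R]_y
            P (b * u)%R u ((b * u / t) `^ kappa * y)%R B
         = P (a * b * u)%R u ((a * b * u / s) `^ kappa * x)%R B)%E).
Proof.
move=> s t u a b B s0 st tu /andP[a0 a1] /andP[b0 b1] mB.
have t0 : 0 < t by exact: lt_le_trans s0 st.
have u0 : 0 < u by exact: lt_le_trans t0 tu.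
have k0 : kappa != 0 by rewrite gt_eqF.
have mP : forall v w, measurable_fun [set: R] (fun y => P v w y B).
  by move=> v w; exact: measurable_kernel.
split.
  have [->|an0] := eqVneq a 0.
    transitivity (\int[P 0%R s 0%R]_x (cst (P 0%R t 0%R B)) x)%E.
      by apply: eq_integral => x _; rewrite /= !mul0r powR0 // mul0r.
    exact: int_cst_pker.
  have apos : 0 < a by rewrite lt_neqAle eq_sym an0.
  have c0 : 0 < a * t / s by rewrite divr_gt0 // mulr_gt0.
  rewrite (@scale_int _ _ _ P_scal (a * t / s) 0 s 0 (fun y => P (a * t) t y B) c0 (lexx 0) (ltW s0) (mP _ _)); last first.
    by move=> y; exact: measure_ge0.
  rewrite mulr0 mulr0 divfK ?gt_eqF //.
  rewrite (P_tf.2 0 (a * t) t 0 B) //; nra.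
move=> x.
have [->|bn0] := eqVneq b 0.
  transitivity (\int[P (a * t)%R t ((a * t / s) `^ kappa * x)%R]_y (cst (P 0%R u 0%R B)) y)%E.
    by apply: eq_integral => y _; rewrite /= !mul0r powR0 // mul0r.
  by rewrite int_cst_pker mulr0 !mul0r powR0 // mul0r.
have at0 : 0 <= a * t by rewrite mulr_ge0 // ltW.
have att : a * t <= t by nra.
have bpos : 0 < b by rewrite lt_neqAle eq_sym bn0.
have c0 : 0 < b * u / t by rewrite divr_gt0 // mulr_gt0.
rewrite (@scale_int _ _ _ P_scal (b * u / t) (a * t) t _ (fun y => P (b * u) u y B) c0 at0 att (mP _ _)); last first.
  by move=> y; exact: measure_ge0.
have -> : b * u / t * (a * t) = a * b * u.
  by field; rewrite gt_eqF.
have -> : b * u / t * t = b * u by rewrite divfK ?gt_eqF.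
have -> : (b * u / t) `^ kappa * ((a * t / s) `^ kappa * x) =
          (a * b * u / s) `^ kappa * x.
  have hats : 0 <= a * t / s by rewrite divr_ge0 // ltW.
  rewrite mulrA -(powRM _ (ltW c0) hats).
  congr (_ `^ _ * _); field; by rewrite ?(gt_eqF s0) ?(gt_eqF t0).

have bu0 : 0 <= b * u by rewrite mulr_ge0 // ltW.
have bu1 : b * u <= u by nra.
have abu : a * b * u <= b * u by rewrite -mulrA; nra.
apply: (P_tf.2 (a * b * u) (b * u) u _ B) => //.
by rewrite -mulrA mulr_ge0.
Qed.
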